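(* For every integer $n\ge 3$, $$Kf^{*}(M_n)=\frac{3}{2}(n^{3}-n)+\frac{3\sqrt{3}\,n^{2}(p^{n}-q^{n})}{p^{n}+q^{n}+2}.$$ In particular $Kf^*(M_n)=9\,Kf(M_n)$.
   Context: For an integer $n\ge 3$, the Möbius polyomino network $M_n$ is the graph with vertex set $\{1,\dots,n\}\cup\{1',\dots,n'\}$ whose edges are $\{i,i+1\}$ and $\{i',(i+1)'\}$ for $1\le i\le n-1$, $\{i,i'\}$ for $1\le i\le n$, and the two edges $\{1,n'\}$ and $\{1',n\}$; it is $3$-regular with $2n$ vertices and $3n$ edges. $p=2+\sqrt3$, $q=2-\sqrt3$. For a connected graph $G$ with $m$ edges, the multiplicative degree-Kirchhoff index is $Kf^*(G)=\sum_{i<j}d_id_jr_{ij}$, where $d_i$ is the degree of vertex $i$ and $r_{ij}$ the resistance distance; equivalently $Kf^*(G)=2m\sum_{k=2}^{N}1/\lambda_k$ where $0=\lambda_1<\lambda_2\le\dots\le\lambda_N$ are the eigenvalues of the normalized Laplacian $D^{-1/2}(D-A)D^{-1/2}$. The Kirchhoff index is $Kf(G)=\sum_{i<j}r_{ij}$. *)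

(* Defs.v *)
From mathcomp Require Import all_boot all_order all_algebra.
From mathcomp Require Import reals.
Set Implicit Arguments. Unset Strict Implicit. Unset Printing Implicit Defensive.
Import Order.TTheory GRing.Theory Num.Theory.
Local Open Scope ring_scope.

(* A finite simple graph on vertex set 'I_N, given by a symmetric
   irreflexive adjacency relation [adj]. *)
Section Graph.
Variables (R : realType) (N : nat) (adj : 'I_N -> 'I_N -> bool).

Definition deg (i : 'I_N) : nat := #|[set j | adj i j]|.

Definition laplacian : 'M[R]_N :=
  \matrix_(i, j) ((if i == j then (deg i)%:R else 0) - (adj i j)%:R).

(* Resistance distance r_ij: inject unit current at i, extract it at j;
   a potential x solves the Kirchhoff equations x L = e_i - e_j
   (L symmetric); r_ij = x_i - x_j.  The solution is obtained with the
   partial inverse [pinvmx] (for a connected graph e_i - e_j lies in the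
   row space of L and the difference x_i - x_j does not depend on the
   chosen solution). *)
Definition resistance (i j : 'I_N) : R :=
  let x := (delta_mx 0 i - delta_mx 0 j : 'rV[R]_N) *m pinvmx laplacian in
  x 0 i - x 0 j.

Definition kirchhoff : R :=
  \sum_(i < N) \sum_(j < N | (i < j)%N) resistance i j.

Definition mult_deg_kirchhoff : R :=
  \sum_(i < N) \sum_(j < N | (i < j)%N) ((deg i * deg j)%:R * resistance i j).
End Graph.

(* Möbius polyomino network M_n on 'I_(2n): vertex k (1 <= k <= n) is index
   k-1, vertex k' is index n+k-1. *)
Definition mobius_edge (n : nat) (u v : nat) : bool :=
  [|| [&& (v < n)%N & v == u.+1]
    , [&& (n <= u)%N, (v < 2 * n)%N & v == u.+1]
    , [&& (u < n)%N & v == u + n]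
    , [&& u == 0%N & v == (2 * n).-1]
    | [&& u == n.-1 & v == n] ].

Definition mobius_adj (n : nat) (u v : 'I_(2 * n)) : bool :=
  mobius_edge n u v || mobius_edge n v u.

(* Main.v *)
Require Import Defs.
From mathcomp Require Import all_boot all_order all_algebra.
From mathcomp Require Import reals.
From mathcomp Require Import zify ring lra.
Import Order.TTheory GRing.Theory Num.Theory.
Local Open Scope ring_scope.

Section M.
Variables (R : realType) (n : nat).
Hypothesis hn : (3 <= n)%N.

Definition sc k := if k.+1 == (2*n)%N then 0%N else k.+1.
Definition pr k := if k == 0%N then (2*n).-1 else k.-1.
Definition op k := if (k < n)%N then (k + n)%N else (k - n)%N.
Definition dd k i := if (i <= k)%N then (k - i)%N else (k + 2*n - i)%N.

Ltac des := repeat match goal with |- context [if ?b then _ else _] =>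
  lazymatch b with context [if _ then _ else _] => fail | _ => let H := fresh "H" in destruct b eqn:H end end.
Ltac pick := first [ apply/orP; first [left; pick | right; pick] | lia ].
Ltac splitH H := first [ case/orP: H => H; splitH H | idtac ].

Lemma adjE (j k : nat) : (j < 2*n)%N -> (k < 2*n)%N ->
  mobius_edge n j k || mobius_edge n k j =
  [|| j == sc k, j == pr k | j == op k].
Proof. move: hn; rewrite /mobius_edge /sc /pr /op => *.
case: ifP => ?; case: ifP => ?; case: ifP => ?;
 apply/idP/idP => H; splitH H; pick. Qed.

Lemma sc_lt k : (k < 2*n)%N -> (sc k < 2*n)%N.
Proof. move: hn; rewrite /sc; case: ifP => *; lia. Qed.
Lemma pr_lt k : (k < 2*n)%N -> (pr k < 2*n)%N.
Proof. move: hn; rewrite /pr; case: ifP => *; lia. Qed.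
Lemma op_lt k : (k < 2*n)%N -> (op k < 2*n)%N.
Proof. move: hn; rewrite /op; case: ifP => *; lia. Qed.
Lemma dd_lt k i : (k < 2*n)%N -> (i < 2*n)%N -> (dd k i < 2*n)%N.
Proof. move: hn; rewrite /dd; case: ifP => *; lia. Qed.
Lemma distinct3 k : (k < 2*n)%N -> [&& sc k != pr k, sc k != op k & pr k != op k].
Proof. move: hn; rewrite /sc /pr /op => *.
case: ifP => ?; case: ifP => ?; case: ifP => ?; lia. Qed.
Lemma dd_sc k i : (k < 2*n)%N -> (i < 2*n)%N -> dd (sc k) i = sc (dd k i).
Proof. move: hn; rewrite /sc /dd => *.
des; lia. Qed.
Lemma dd_pr k i : (k < 2*n)%N -> (i < 2*n)%N -> dd (pr k) i = pr (dd k i).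
Proof. move: hn; rewrite /pr /dd => *.
des; lia. Qed.
Lemma dd_op k i : (k < 2*n)%N -> (i < 2*n)%N -> dd (op k) i = op (dd k i).
Proof. move: hn; rewrite /op /dd => *.
des; lia. Qed.
Lemma dd0 k i : (k < 2*n)%N -> (i < 2*n)%N -> (dd k i == 0%N) = (k == i).
Proof. move: hn; rewrite /dd => *. case: ifP => ?; lia. Qed.
Definition rr : R := Num.sqrt 3.
Definition pp : R := 2 + rr.
Definition qq : R := 2 - rr.
Definition PP : R := pp ^+ n.
Definition cc : R := (2 * rr * (PP + 1))^-1.
Definition sf (k : nat) : R := (k%:R ^+ 2 - n%:R * k%:R) / (2 * n%:R).
Definition af (k : nat) : R := cc * (PP * qq ^+ k - pp ^+ k).
Definition gf (k : nat) : R :=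
  if (k < n)%N then (sf k + af k) / 2 else (sf (k - n) - af (k - n)) / 2.

Lemma rr2 : rr ^+ 2 = 3.
Proof. by rewrite /rr sqr_sqrtr // ler0n. Qed.
Lemma rr_gt0 : 0 < rr.
Proof. by rewrite /rr sqrtr_gt0 ltr0n. Qed.
Lemma pq1 : pp * qq = 1.
Proof. rewrite /pp /qq. have h := rr2. rewrite (_ : (2+rr)*(2-rr) = 4 - rr^+2); [rewrite h; ring | ring]. Qed.
Lemma pp2 : pp ^+ 2 = 4 * pp - 1.
Proof. rewrite /pp. have h := rr2. rewrite (_ : (2 + rr)^+2 = 4 + 4 * rr + rr^+2); [rewrite h; ring | ring]. Qed.
Lemma qq2 : qq ^+ 2 = 4 * qq - 1.
Proof. rewrite /qq. have h := rr2. rewrite (_ : (2 - rr)^+2 = 4 - 4 * rr + rr^+2); [rewrite h; ring | ring]. Qed.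
Lemma pp_gt0 : 0 < pp.
Proof. rewrite /pp; have := rr_gt0; lra. Qed.
Lemma PP_gt0 : 0 < PP.
Proof. by rewrite /PP exprn_gt0 // pp_gt0. Qed.
Lemma n_neq0 : n%:R != 0 :> R.
Proof. rewrite pnatr_eq0; move: hn; lia. Qed.

Lemma S_rec m : sf m.+2 = 2 * sf m.+1 - sf m + n%:R^-1.
Proof. have := n_neq0. rewrite /sf -!natr1 => h. field. by rewrite h. Qed.
Lemma A_rec m : af m.+2 = 4 * af m.+1 - af m.
Proof.
have ep : pp ^+ m.+2 = 4 * pp ^+ m.+1 - pp ^+ m.
  by rewrite !exprS mulrA -expr2 pp2; ring.
have eq : qq ^+ m.+2 = 4 * qq ^+ m.+1 - qq ^+ m.
  by rewrite !exprS mulrA -expr2 qq2; ring.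
rewrite /af ep eq. ring.
Qed.
Lemma sf0 : sf 0 = 0.
Proof. by rewrite /sf mulr0n expr0n /= mulr0 subr0 mul0r. Qed.
Lemma sfn : sf n = 0.
Proof. have := n_neq0. rewrite /sf => h. field. by rewrite h. Qed.
Lemma sf1 : sf 1 = (1 - n%:R) / (2 * n%:R).
Proof. by rewrite /sf expr1n mulr1. Qed.
Lemma QP : qq ^+ n * PP = 1.
Proof. by rewrite /PP -exprMn mulrC pq1 expr1n. Qed.
Lemma afn : af n = - af 0.
Proof. rewrite /af expr0 (mulrC PP) QP -/PP. ring. Qed.
Lemma sfn1 : sf n.-1 = sf 1.
Proof. have h := n_neq0. have hn1 : n = (n.-1).+1 by move: hn; lia.
have e : (n%:R : R) = (n.-1)%:R + 1 by rewrite natr1 -hn1.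
rewrite /sf e. rewrite e in h. field. by rewrite h. Qed.
Lemma afn1 : af n.-1 = - af 1.
Proof.
have hn1 : n = (n.-1).+1 by move: hn; lia.
have e1 : PP * qq ^+ n.-1 = pp.
  rewrite /PP {1}hn1 exprS. rewrite -mulrA -exprMn pq1 expr1n mulr1 //.
have e2 : pp ^+ n.-1 = PP * qq.
  rewrite /PP {2}hn1 exprS. by rewrite mulrAC pq1 mul1r.
rewrite /af e1 e2 expr1. ring.
Qed.
Lemma jump : af 1 = 2 * af 0 - 1 / 2.
Proof.
have h1 := rr_gt0. have h2 := PP_gt0.
rewrite /af /cc /qq !expr1 expr0 /pp. field.
apply/andP; split; rewrite ?pnatr_eq0 //; apply/negP => /eqP; lra.
Qed.

Lemma gf_lo k : (k < n)%N -> gf k = (sf k + af k) / 2.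
Proof. by rewrite /gf => ->. Qed.
Lemma gf_hi j : gf (j + n) = (sf j - af j) / 2.
Proof. by rewrite /gf ifF ?addnK //; lia. Qed.

Ltac nq := rewrite /sc /pr /op; des; lia.

Lemma L4 t : (t < 2*n)%N ->
  3 * gf t - (gf (sc t) + gf (pr t) + gf (op t)) = (t == 0%N)%:R - (2 * n%:R)^-1.
Proof.
move=> ht; have hn0 := n_neq0; have h3 := hn.
have [->|t0] := eqVneq t 0%N.
  rewrite (_ : sc 0 = 1%N); last by nq.
  rewrite (_ : pr 0 = (n.-1 + n)%N); last by nq.
  rewrite (_ : op 0 = (0 + n)%N); last by nq.
  rewrite !gf_hi (@gf_lo 0); last lia.
  rewrite (@gf_lo 1); last lia.
  rewrite sfn1 afn1 sf0 jump sf1 ?eqxx /=. field. by rewrite hn0.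
have [ht1|ht1] := ltnP t.+1 n.
  have [m em] : exists m, t = m.+1 by exists t.-1; lia.
  subst t.
  rewrite (_ : sc m.+1 = m.+2); last by nq.
  rewrite (_ : pr m.+1 = m); last by nq.
  rewrite (_ : op m.+1 = (m.+1 + n)%N); last by nq.
  rewrite gf_hi (@gf_lo m.+1); last lia.
  rewrite (@gf_lo m.+2); last lia.
  rewrite (@gf_lo m); last lia.
  rewrite S_rec A_rec /=. field. by rewrite hn0.
have [ht2|ht2] := eqVneq t.+1 n.
  have [m em] : exists m, t = m.+1 by exists t.-1; lia.
  subst t.
  rewrite (_ : sc m.+1 = (0 + n)%N); last by nq.
  rewrite (_ : pr m.+1 = m); last by nq.
  rewrite (_ : op m.+1 = (m.+1 + n)%N); last by nq.
  rewrite !gf_hi (@gf_lo m.+1); last lia.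
  rewrite (@gf_lo m); last lia.
  have e1 := S_rec m. have e2 := A_rec m.
  rewrite ht2 sfn afn in e1 e2.
  rewrite sf0 /=.
  have -> : af 0 = - (4 * af m.+1 - af m) by rewrite -e2 opprK.
  have -> : sf m = 2 * sf m.+1 + n%:R^-1 by rewrite -[sf m]addr0 e1; ring.
  field. by rewrite hn0.
have [ht3|ht3] := eqVneq t n.
  subst t.
  rewrite (_ : sc n = (1 + n)%N); last by nq.
  rewrite (_ : pr n = n.-1); last by nq.
  rewrite (_ : op n = 0%N); last by nq.
  rewrite -{1}(add0n n) !gf_hi (@gf_lo n.-1); last lia.
  rewrite (@gf_lo 0); last lia.
  rewrite sfn1 afn1 sf0 jump sf1 /=.
  field. by rewrite hn0.
have [ht4|ht4] := ltnP t.+1 (2*n).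
  have [m em] : exists m, t = (m.+1 + n)%N by exists (t - n).-1; lia.
  subst t.
  rewrite (_ : sc (m.+1 + n) = (m.+2 + n)%N); last by nq.
  rewrite (_ : pr (m.+1 + n) = (m + n)%N); last by nq.
  rewrite (_ : op (m.+1 + n) = m.+1); last by nq.
  rewrite !gf_hi (@gf_lo m.+1); last lia.
  rewrite S_rec A_rec /=.
  field. by rewrite hn0.
have [m em] : exists m, t = (m.+1 + n)%N /\ n = m.+2 by exists (n.-2); lia.
case: em => em en. subst t.
rewrite (_ : sc (m.+1 + n) = 0%N); last by nq.
rewrite (_ : pr (m.+1 + n) = (m + n)%N); last by nq.
rewrite (_ : op (m.+1 + n) = m.+1); last by nq.
rewrite !gf_hi (@gf_lo m.+1); last lia.
rewrite (@gf_lo 0); last lia.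
have e1 := S_rec m. have e2 := A_rec m.
rewrite -en sfn afn in e1 e2.
rewrite sf0 /=.
have -> : af 0 = - (4 * af m.+1 - af m) by rewrite -e2 opprK.
have -> : sf m = 2 * sf m.+1 + n%:R^-1 by rewrite -[sf m]addr0 e1; ring.
field. by rewrite hn0.
Qed.

Notation N := (2 * n)%N.
Notation LL := (laplacian R (@mobius_adj n)).

Definition osc (k : 'I_N) : 'I_N := Ordinal (@sc_lt k (ltn_ord k)).
Definition opr (k : 'I_N) : 'I_N := Ordinal (@pr_lt k (ltn_ord k)).
Definition oop (k : 'I_N) : 'I_N := Ordinal (@op_lt k (ltn_ord k)).

Lemma adjO (j k : 'I_N) : mobius_adj j k = [|| j == osc k, j == opr k | j == oop k].
Proof. by rewrite /mobius_adj adjE. Qed.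

Lemma sum_delta (F : 'I_N -> R) a : \sum_j F j * (j == a)%:R = F a.
Proof.
rewrite (bigD1 a) //= eqxx mulr1 big1 ?addr0 // => j /negbTE ->; by rewrite mulr0.
Qed.

Lemma sum3 (F : 'I_N -> R) a b c : a != b -> a != c -> b != c ->
  \sum_j F j * ([|| j == a, j == b | j == c])%:R = F a + F b + F c.
Proof.
move=> hab hac hbc.
rewrite (eq_bigr (fun j => F j * (j==a)%:R + F j * (j==b)%:R + F j * (j==c)%:R)).
  by rewrite !big_split /= !sum_delta.
move=> j _.
case: (eqVneq j a) => [->|ja]; first by rewrite (negbTE hab) (negbTE hac) /=; ring.
case: (eqVneq j b) => [->|jb]; first by rewrite (negbTE hbc) /=; ring.
case: (eqVneq j c) => [->|jc]; by rewrite /=; ring.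
Qed.

Lemma distO k : [&& osc k != opr k, osc k != oop k & opr k != oop k].
Proof. by have := @distinct3 k (ltn_ord k). Qed.

Lemma adj_sym (j k : 'I_N) : mobius_adj j k = mobius_adj k j.
Proof. by rewrite /mobius_adj orbC. Qed.

Lemma deg3 (i : 'I_N) : deg (@mobius_adj n) i = 3%N.
Proof.
have : (deg (@mobius_adj n) i)%:R = 3 :> R.
  rewrite /deg cardsE -sum1_card natr_sum big_mkcond /=.
  rewrite (eq_bigr (fun j => 1 * ([|| j == osc i, j == opr i | j == oop i])%:R)).
    case/and3P: (distO i) => h1 h2 h3. rewrite sum3 //. ring.
  move=> j _. rewrite [j \in _](_ : _ = mobius_adj j i); last by rewrite adj_sym.
  rewrite adjO. by case: (_ || _); rewrite mul1r.
by move=> h; apply/eqP; rewrite -(eqr_nat R) h.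
Qed.

Lemma mulL (v : 'rV[R]_N) k :
  (v *m LL) 0 k = 3 * v 0 k - (v 0 (osc k) + v 0 (opr k) + v 0 (oop k)).
Proof.
rewrite mxE.
rewrite (eq_bigr (fun j => (3 * v 0 j) * (j == k)%:R
   - v 0 j * ([|| j == osc k, j == opr k | j == oop k])%:R)).
  case/and3P: (distO k) => h1 h2 h3.
  by rewrite sumrB sum_delta sum3.
move=> j _. rewrite !mxE adjO.
case: (eqVneq j k) => [->|jk] /=; last by ring.
rewrite deg3. ring.
Qed.

Definition gvec (i : 'I_N) : 'rV[R]_N := \row_j gf (dd j i).

Lemma gvecL i k : (gvec i *m LL) 0 k = (k == i)%:R - (2 * n%:R)^-1.
Proof.
rewrite mulL !mxE /=.
have hk := ltn_ord k; have hi := ltn_ord i.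
rewrite (@dd_sc k i) // (@dd_pr k i) // (@dd_op k i) // L4; last exact: dd_lt.
by rewrite dd0.
Qed.

Lemma sc_pr a : (a < N)%N -> sc (pr a) = a.
Proof. move: hn; rewrite /sc /pr => *; des; lia. Qed.

Lemma kernel (z : 'rV[R]_N) : z *m LL = 0 -> forall a b, z 0 a = z 0 b.
Proof.
move=> hz.
have h0 : (0 < N)%N by move: hn; lia.
pose i0 : 'I_N := Ordinal h0.
case: (@Order.TotalTheory.arg_maxP _ _ _ i0 xpredT (fun k => z 0 k) isT) => k0 _ hmax.
have hmax' : forall k, z 0 k <= z 0 k0 by move=> k; exact: hmax.
have step : forall k, z 0 k = z 0 k0 -> z 0 (osc k) = z 0 k0.
  move=> k hk. have := mulL z k. rewrite hz mxE hk => e.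
  have := hmax' (osc k); have := hmax' (opr k); have := hmax' (oop k). lra.
have all : forall m (a : 'I_N), dd a k0 = m -> z 0 a = z 0 k0.
  elim=> [|m IH] a ha.
    have : (dd a k0 == 0%N) by rewrite ha.
    by rewrite dd0 // => /eqP/val_inj ->.
  have hp : dd (opr a) k0 = m.
    by rewrite /= dd_pr // ha.
  have := step _ (IH _ hp).
  have -> : osc (opr a) = a by apply: val_inj; rewrite /= sc_pr.
  done.
by move=> a b; rewrite (all _ a erefl) (all _ b erefl).
Qed.

Lemma res_eq (i j : 'I_N) :
  resistance R (@mobius_adj n) i j = 2 * gf 0 - gf (dd i j) - gf (dd j i).
Proof.
rewrite /resistance.
set u := (delta_mx 0 i - delta_mx 0 j : 'rV[R]_N).
set x := gvec i - gvec j.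
have hu : x *m LL = u.
  have gi : forall l, gvec l *m LL = \row_k ((k == l)%:R - (2 * n%:R)^-1).
    by move=> l; apply/rowP => k; rewrite gvecL mxE.
  rewrite /x mulmxBl !gi; apply/rowP => k.
  rewrite !mxE /=. ring.
have hle : (u <= LL)%MS by rewrite -hu submxMl.
set y := u *m pinvmx LL.
have hy : y *m LL = u by rewrite /y mulmxKpV.
have hk : (y - x) *m LL = 0 by rewrite mulmxBl hy hu subrr.
have e := kernel _ hk i j.
have ex : forall a, (y - x) 0 a = y 0 a - x 0 a by move=> a; rewrite !mxE.
rewrite !ex in e.
have -> : y 0 i - y 0 j = x 0 i - x 0 j by move: e; lra.
rewrite /x !mxE.
have di : dd i i = 0%N by rewrite /dd leqnn subnn.
have dj : dd j j = 0%N by rewrite /dd leqnn subnn.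
rewrite di dj. ring.
Qed.

Lemma sum_sf m : \sum_(0 <= t < m) sf t =
  (m%:R * (m%:R - 1) * (2 * m%:R - 1) / 6 - n%:R * (m%:R * (m%:R - 1) / 2)) / (2 * n%:R).
Proof.
have hn0 := n_neq0.
elim: m => [|m IH].
  rewrite big_geq // mul0r !mul0r mulr0 subr0 mul0r //.
rewrite big_nat_recr //= IH /sf. have -> : (m.+1%:R : R) = m%:R + 1 by rewrite natr1. field. by rewrite hn0.
Qed.

Lemma sum_gf : \sum_(t < N) gf t = \sum_(0 <= t < n) sf t.
Proof.
rewrite -(big_mkord xpredT gf) (@big_cat_nat _ _ _ n) //=; last by move: hn; lia.
rewrite -{2}(add0n n) big_addn (_ : (2 * n - n = n)%N); last by lia.
rewrite -big_split /=. apply: eq_big_nat => t /andP [_ ht].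
rewrite gf_lo // gf_hi. field.
all: try (move: hn; lia).
Qed.

Lemma dd_inj (i : 'I_N) : injective (fun j : 'I_N => (Ordinal (@dd_lt i j (ltn_ord i) (ltn_ord j)) : 'I_N)).
Proof.
move=> j j' /(congr1 val) /= e. apply: val_inj => /=.
have := ltn_ord i; have := ltn_ord j; have := ltn_ord j'.
move: e; rewrite /dd; des; lia.
Qed.

Lemma sum_dd (i : 'I_N) : \sum_(j < N) gf (dd i j) = \sum_(t < N) gf t.
Proof. by rewrite [RHS](reindex_inj (dd_inj i)). Qed.

Lemma sum_sym (F : 'I_N -> 'I_N -> R) : (forall i j, F i j = F j i) -> (forall i, F i i = 0) ->
  \sum_(i < N) \sum_(j < N | (i < j)%N) F i j = (\sum_(i < N) \sum_(j < N) F i j) / 2.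
Proof.
move=> hs hd.
have A : \sum_(i < N) \sum_(j < N | (i < j)%N) F i j = \sum_(i < N) \sum_(j < N) (i < j)%:R * F i j.
  apply: eq_bigr => i _; rewrite big_mkcond; apply: eq_bigr => j _.
  by case: (i < j)%N; rewrite /= ?mulr1n ?mulr0n ?mul1r ?mul0r.
have B : \sum_(i < N) \sum_(j < N) F i j =
   \sum_(i < N) \sum_(j < N) (i < j)%:R * F i j + \sum_(i < N) \sum_(j < N) (j < i)%:R * F i j.
  rewrite -big_split; apply: eq_bigr => i _; rewrite -big_split; apply: eq_bigr => j _ /=.
  case: (ltngtP i j) => h /=; rewrite ?mulr1n ?mulr0n ?mul1r ?mul0r ?addr0 ?add0r //.
  by rewrite (val_inj h) hd.
have C : \sum_(i < N) \sum_(j < N) (j < i)%:R * F i j = \sum_(i < N) \sum_(j < N) (i < j)%:R * F i j.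
  rewrite exchange_big; apply: eq_bigr => i _; apply: eq_bigr => j _. by rewrite hs.
rewrite B C A. by field.
Qed.

Lemma Kf_eq : kirchhoff R (@mobius_adj n) =
  ((N%:R * N%:R) * (2 * gf 0) - 2 * (N%:R * \sum_(0 <= t < n) sf t)) / 2.
Proof.
rewrite /kirchhoff.
rewrite (eq_bigr (fun i : 'I_N => \sum_(j < N | (i < j)%N) (2 * gf 0 - gf (dd i j) - gf (dd j i)))); last first.
  by move=> i _; apply: eq_bigr => j _; exact: res_eq.
rewrite (@sum_sym (fun i j : 'I_N => 2 * gf 0 - gf (dd i j) - gf (dd j i))); last 2 first.
- by move=> i j /=; ring.
- by move=> i /=; rewrite /dd leqnn subnn; ring.
congr (_ / 2).
rewrite (eq_bigr (fun i : 'I_N => (2 * gf 0) *+ N - \sum_(j < N) gf (dd i j) - \sum_(j < N) gf (dd j i))); last first.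
  by move=> i _; rewrite !sumrB sumr_const card_ord.
rewrite !sumrB sumr_const card_ord.
rewrite (eq_bigr (fun i : 'I_N => \sum_(t < N) gf t)); last by move=> i _; exact: sum_dd.
rewrite [X in _ - X]exchange_big /=.
rewrite [X in _ - X](eq_bigr (fun i : 'I_N => \sum_(t < N) gf t)); last by move=> i _; exact: sum_dd.
rewrite sumr_const card_ord sum_gf.
set S := \sum_(0 <= t < n) sf t. set g := gf 0.
rewrite -(mulr_natl (2 * g)) -(mulr_natl (N%:R * (2 * g))) -(mulr_natl S). ring.
Qed.

Lemma main_sec :
  let p : R := 2 + Num.sqrt 3 in
  let q : R := 2 - Num.sqrt 3 in
  mult_deg_kirchhoff R (@mobius_adj n) =
    3 / 2 * (n%:R ^+ 3 - n%:R)
    + 3 * Num.sqrt 3 * n%:R ^+ 2 * (p ^+ n - q ^+ n) / (p ^+ n + q ^+ n + 2)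
  /\ mult_deg_kirchhoff R (@mobius_adj n) = 9 * kirchhoff R (@mobius_adj n).
Proof.
move=> p q.
have hM : mult_deg_kirchhoff R (@mobius_adj n) = 9 * kirchhoff R (@mobius_adj n).
  rewrite /mult_deg_kirchhoff /kirchhoff mulr_sumr; apply: eq_bigr => i _.
  rewrite mulr_sumr; apply: eq_bigr => j _. by rewrite !deg3.
split=> //. rewrite hM Kf_eq.
rewrite (@gf_lo 0); last by move: hn; lia.
rewrite sf0 sum_sf /af expr0 mulr1.
rewrite /p /q -/rr -/pp -/qq -/PP.
have hP := PP_gt0. have hr := rr_gt0. have hn0 := n_neq0.
have hPn : PP != 0 by rewrite gt_eqF.
have hQ : qq ^+ n = PP^-1.
  by apply: (mulIf hPn); rewrite QP mulVf.
have h9 : (9 : R) = 3 * rr ^+ 2 by rewrite rr2; ring.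
have hr0 : rr != 0 by rewrite gt_eqF.
have h3 : 3 * rr = 9 / rr by rewrite h9; field.
rewrite hQ h3 natrM /cc !expr0.
field.
apply/and5P; split => //; rewrite gt_eqF //; nra.
Qed.

End M.

Theorem theorem4p4 (R : realType) (n : nat) (hn : (3 <= n)%N) :
  let p : R := 2 + Num.sqrt 3 in
  let q : R := 2 - Num.sqrt 3 in
  mult_deg_kirchhoff R (@mobius_adj n) =
    3 / 2 * (n%:R ^+ 3 - n%:R)
    + 3 * Num.sqrt 3 * n%:R ^+ 2 * (p ^+ n - q ^+ n) / (p ^+ n + q ^+ n + 2)
  /\ mult_deg_kirchhoff R (@mobius_adj n) = 9 * kirchhoff R (@mobius_adj n).
Proof. exact: (@main_sec R n hn). Qed.
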